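(* Let $M,N\in\Lambda^{001}$ with $M\longrightarrow_\beta^\infty N$. Then there exist terms $M_0,M_1,M_2,\ldots\in\Lambda^{001}$ such that $M_0=M$ and, for every $d\in\mathbf N$, $$M_0\longrightarrow_{\beta\ge 0}^* M_1\longrightarrow_{\beta\ge1}^* M_2\longrightarrow_{\beta\ge2}^*\cdots\longrightarrow_{\beta\ge d-1}^* M_d \longrightarrow_{\beta\ge d}^\infty N.$$
   Context: Fix a set $\mathcal V$ of variables. A 001-infinitary λ-term is a possibly infinite tree built from variables $x\in\mathcal V$, abstractions $\lambda x.M$ and applications $(M)N$ ($N$ the argument), such that every infinite branch enters infinitely often the argument position of an application node; $\Lambda^{001}$ is the set of such terms, up to α-equivalence, with fresh variables always available. $M[N/x]$ denotes capture-avoiding substitution. One-step β-reduction $\longrightarrow_\beta$ is the contextual closure (finite derivations) of $(\lambda x.M)N\longrightarrow_\beta M[N/x]$; $\longrightarrow_\beta^*$ is its reflexive-transitive closure. The infinitary reduction $\longrightarrow_\beta^\infty$ is defined by the rules below, where derivations may be infinite provided every infinite branch passes infinitely often through the third premise of (@): (var) $M\longrightarrow_\beta^* x\Rightarrow M\longrightarrow_\beta^\infty x$; (λ) $M\longrightarrow_\beta^*\lambda x.P$ and $P\longrightarrow_\beta^\infty P'$ $\Rightarrow M\longrightarrow_\beta^\infty\lambda x.P'$; (@) $M\longrightarrow_\beta^*(P)Q$, $P\longrightarrow_\beta^\infty P'$, $Q\longrightarrow_\beta^\infty Q'$ $\Rightarrow M\longrightarrow_\beta^\infty(P')Q'$.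 Min-depth reduction: $\longrightarrow_{\beta\ge0}$ is $\longrightarrow_\beta$; for $d\ge0$, $\longrightarrow_{\beta\ge d+1}$ is defined inductively by: $M\longrightarrow_{\beta\ge d+1}N\Rightarrow\lambda x.M\longrightarrow_{\beta\ge d+1}\lambda x.N$; $M\longrightarrow_{\beta\ge d+1}N\Rightarrow(M)P\longrightarrow_{\beta\ge d+1}(N)P$; $M\longrightarrow_{\beta\ge d}N\Rightarrow(P)M\longrightarrow_{\beta\ge d+1}(P)N$ (i.e. contraction of a redex whose path from the root crosses at least $d+1$ argument positions). $\longrightarrow_{\beta\ge d}^*$ is its reflexive-transitive closure. Min-depth infinitary reduction: $\longrightarrow_{\beta\ge0}^\infty$ is $\longrightarrow_\beta^\infty$; for $d\ge1$, $\longrightarrow_{\beta\ge d}^\infty$ is defined inductively (finite derivations) by: $x\longrightarrow_{\beta\ge d}^\infty x$; $M\longrightarrow_{\beta\ge d}^\infty M'\Rightarrow\lambda x.M\longrightarrow_{\beta\ge d}^\infty\lambda x.M'$; ($M\longrightarrow_{\beta\ge d}^\infty M'$ and $N\longrightarrow_{\beta\ge d-1}^\infty N'$) $\Rightarrow (M)N\longrightarrow_{\beta\ge d}^\infty(M')N'$. *)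

(* Defs.v *)
(* Infinitary lambda-terms up to alpha-equivalence, represented
   with de Bruijn indices as a coinductive type (possibly infinite trees). *)
From Stdlib Require Import Arith.

CoInductive term : Type :=
| Var : nat -> term
| Lam : term -> term
| App : term -> term -> term.   (* App M N = (M)N, N the argument *)

CoInductive bisim : term -> term -> Prop :=
| bisim_var n : bisim (Var n) (Var n)
| bisim_lam M M' : bisim M M' -> bisim (Lam M) (Lam M')
| bisim_app M M' N N' : bisim M M' -> bisim N N' -> bisim (App M N) (App M' N').

Inductive dir : Type := DLam | DFun | DArg.

Definition child (d : dir) (t : term) : option term :=
  match d, t with
  | DLam, Lam M => Some M
  | DFun, App M _ => Some M
  | DArg, App _ N => Some N
  | _, _ => None
  end.

Fixpoint follow (t : term) (b : nat -> dir) (n : nat) : option term :=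
  match n with
  | 0 => Some t
  | S n' => match child (b 0) t with
            | Some t' => follow t' (fun k => b (S k)) n'
            | None => None
            end
  end.

Definition is_branch (t : term) (b : nat -> dir) : Prop :=
  forall n, follow t b n <> None.

Definition is001 (t : term) : Prop :=
  forall b, is_branch t b -> forall n, exists m, n <= m /\ b m = DArg.

CoFixpoint lift (c : nat) (t : term) : term :=
  match t with
  | Var n => if n <? c then Var n else Var (S n)
  | Lam M => Lam (lift (S c) M)
  | App M N => App (lift c M) (lift c N)
  end.

(* subst k Nk t : replaces index k by Nk (already lifted k times) and
   decrements the free indices above k. *)
CoFixpoint subst (k : nat) (Nk : term) (t : term) : term :=
  match t with
  | Var n => if n <? k then Var n else if n =? k then Nk else Var (pred n)
  | Lam M => Lam (subst (S k) (lift 0 Nk) M)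
  | App M N => App (subst k Nk M) (subst k Nk N)
  end.

(* M[N/x] where x is the variable bound by the abstraction *)
Definition subst0 (N M : term) : term := subst 0 N M.

Inductive beta : term -> term -> Prop :=
| beta_redex M N P : bisim P (subst0 N M) -> beta (App (Lam M) N) P
| beta_lam M M' : beta M M' -> beta (Lam M) (Lam M')
| beta_appl M M' N N' : beta M M' -> bisim N N' -> beta (App M N) (App M' N')
| beta_appr M M' N N' : bisim M M' -> beta N N' -> beta (App M N) (App M' N').

Inductive star (R : term -> term -> Prop) : term -> term -> Prop :=
| star_refl M N : bisim M N -> star R M N
| star_step M N P : R M N -> star R N P -> star R M P.

(* ---------- infinitary beta reduction ->_beta^infty ----------
   Mixed inductive/coinductive definition: the (var), (lam) rules and the
   first two premises of (@) are inductive, the third premise of (@) (the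
   argument position) is coinductive.  [inf_rules R] is the inductive part
   with the argument premise in R; [infred] is the greatest fixed point. *)
Inductive inf_rules (R : term -> term -> Prop) : term -> term -> Prop :=
| inf_var M x : star beta M (Var x) -> inf_rules R M (Var x)
| inf_lam M P P' : star beta M (Lam P) -> inf_rules R P P' ->
    inf_rules R M (Lam P')
| inf_app M P Q P' Q' : star beta M (App P Q) -> inf_rules R P P' -> R Q Q' ->
    inf_rules R M (App P' Q').

Definition infred (M N : term) : Prop :=
  exists R : term -> term -> Prop,
    (forall A B, R A B -> inf_rules R A B) /\ R M N.

Inductive beta_ge : nat -> term -> term -> Prop :=
| bge_0 M N : beta M N -> beta_ge 0 M N
| bge_lam d M M' : beta_ge (S d) M M' -> beta_ge (S d) (Lam M) (Lam M')
| bge_appl d M M' N N' : beta_ge (S d) M M' -> bisim N N' ->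
    beta_ge (S d) (App M N) (App M' N')
| bge_appr d M M' N N' : bisim M M' -> beta_ge d N N' ->
    beta_ge (S d) (App M N) (App M' N').

Inductive infred_ge : nat -> term -> term -> Prop :=
| ige_0 M N : infred M N -> infred_ge 0 M N
| ige_var d x : infred_ge (S d) (Var x) (Var x)
| ige_lam d M M' : infred_ge (S d) M M' -> infred_ge (S d) (Lam M) (Lam M')
| ige_app d M M' N N' : infred_ge (S d) M M' -> infred_ge d N N' ->
    infred_ge (S d) (App M N) (App M' N').

(* Main.v *)
Require Import Defs.
From Stdlib Require Import Arith Lia Classical ClassicalEpsilon.

Definition tu (t : term) : term :=
  match t with Var n => Var n | Lam M => Lam M | App M N => App M N end.
Lemma tu_eq t : t = tu t. Proof. destruct t; reflexivity. Qed.

Lemma lift_var c n : lift c (Var n) = if n <? c then Var n else Var (S n).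
Proof. rewrite (tu_eq (lift c (Var n))); simpl; destruct (n <? c); reflexivity. Qed.
Lemma lift_lam c M : lift c (Lam M) = Lam (lift (S c) M).
Proof. rewrite (tu_eq (lift c (Lam M))); reflexivity. Qed.
Lemma lift_app c M N : lift c (App M N) = App (lift c M) (lift c N).
Proof. rewrite (tu_eq (lift c (App M N))); reflexivity. Qed.
Lemma subst_var k u n : subst k u (Var n) =
  if n <? k then Var n else if n =? k then u else Var (pred n).
Proof. rewrite (tu_eq (subst k u (Var n))); simpl.
  destruct (n <? k); [reflexivity|]. destruct (n =? k); [|reflexivity].
  symmetry; apply tu_eq. Qed.
Lemma subst_lam k u M : subst k u (Lam M) = Lam (subst (S k) (lift 0 u) M).
Proof. rewrite (tu_eq (subst k u (Lam M))); reflexivity. Qed.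
Lemma subst_app k u M N : subst k u (App M N) = App (subst k u M) (subst k u N).
Proof. rewrite (tu_eq (subst k u (App M N))); reflexivity. Qed.

Inductive bstep (R : term -> term -> Prop) : term -> term -> Prop :=
| bs_var n : bstep R (Var n) (Var n)
| bs_lam M M' : R M M' -> bstep R (Lam M) (Lam M')
| bs_app M M' N N' : R M M' -> R N N' -> bstep R (App M N) (App M' N').

Lemma bisim_coind0 (R : term -> term -> Prop) :
  (forall a b, R a b -> bstep R a b) -> forall a b, R a b -> bisim a b.
Proof.
  intros H. cofix CH. intros a b Hab.
  destruct (H a b Hab); constructor; apply CH; assumption.
Qed.

Lemma bisim_coind (R : term -> term -> Prop) :
  (forall a b, R a b -> bstep (fun x y => R x y \/ bisim x y) a b) ->
  forall a b, R a b -> bisim a b.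
Proof.
  intros H a b Hab.
  apply (bisim_coind0 (fun x y => R x y \/ bisim x y)); [|left; exact Hab].
  intros x y [Hxy|Hxy]. apply H; exact Hxy.
  destruct Hxy; constructor; right; assumption.
Qed.

Lemma bisim_refl : forall t, bisim t t.
Proof. cofix CH; destruct t; constructor; apply CH. Qed.
Lemma bisim_sym : forall t u, bisim t u -> bisim u t.
Proof. cofix CH; intros t u H; destruct H; constructor; apply CH; assumption. Qed.
Lemma bisim_trans : forall t u v, bisim t u -> bisim u v -> bisim t v.
Proof.
  intros t u v H1 H2.
  apply (bisim_coind (fun a c => exists b, bisim a b /\ bisim b c)); [|eauto].
  clear. intros a c [b [H1 H2]].
  destruct H1; inversion H2; subst; constructor; left; eauto.
Qed.

Lemma lift_bisim : forall c t t', bisim t t' -> bisim (lift c t) (lift c t').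
Proof.
  intros c t t' H.
  apply (bisim_coind (fun a b => exists c t t', a = lift c t /\ b = lift c t' /\ bisim t t'));
    [|eauto 6].
  clear. intros a b [c [t [t' [-> [-> H]]]]].
  destruct H.
  - rewrite lift_var. destruct (n <? c); constructor.
  - rewrite !lift_lam. constructor. left; eauto 6.
  - rewrite !lift_app. constructor; left; eauto 6.
Qed.

Lemma subst_bisim : forall k u u' t t', bisim t t' -> bisim u u' ->
  bisim (subst k u t) (subst k u' t').
Proof.
  intros k u u' t t' H Hu.
  apply (bisim_coind (fun a b => exists k u u' t t', a = subst k u t /\ b = subst k u' t'
     /\ bisim t t' /\ bisim u u')); [|eauto 10].
  clear. intros a b [k [u [u' [t [t' [-> [-> [H Hu]]]]]]]].
  destruct H.
  - rewrite !subst_var. destruct (n <? k); [constructor|].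
    destruct (n =? k); [|constructor].
    destruct Hu; constructor; right; assumption.
  - rewrite !subst_lam. constructor. left.
    exists (S k), (lift 0 u), (lift 0 u'), M, M'. repeat split; auto.
    apply lift_bisim; auto.
  - rewrite !subst_app. constructor; left; eauto 10.
Qed.

Lemma beta_bisim_l : forall B C, beta B C -> forall A, bisim A B -> beta A C.
Proof.
  induction 1; intros A HA; inversion HA; subst.
  - match goal with H : bisim _ (Lam _) |- _ => inversion H; subst end.
    apply beta_redex. eapply bisim_trans; [exact H|].
    apply bisim_sym. apply subst_bisim; assumption.
  - apply beta_lam. apply IHbeta; assumption.
  - apply beta_appl. apply IHbeta; assumption. eapply bisim_trans; eauto.
  - apply beta_appr. eapply bisim_trans; eauto. apply IHbeta; assumption.
Qed.

Lemma star_trans_beta : forall A B C, star beta A B -> star beta B C -> star beta A C.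
Proof.
  intros A B C H; revert C; induction H; intros C H2.
  - destruct H2.
    + apply star_refl. eapply bisim_trans; eauto.
    + eapply star_step; [|exact H2]. eapply beta_bisim_l; eauto.
  - eapply star_step; eauto.
Qed.

Lemma star_map (R1 R2 : term -> term -> Prop) : (forall a b, R1 a b -> R2 a b) ->
  forall a b, star R1 a b -> star R2 a b.
Proof. intros H a b Hs; induction Hs; [apply star_refl; auto | eapply star_step; eauto]. Qed.

Lemma star_beta_lam M M' : star beta M M' -> star beta (Lam M) (Lam M').
Proof. induction 1. apply star_refl; constructor; auto. eapply star_step; [apply beta_lam; eauto|auto]. Qed.
Lemma star_beta_appl M M' N : star beta M M' -> star beta (App M N) (App M' N).
Proof. induction 1. apply star_refl; constructor; auto using bisim_refl.
  eapply star_step; [apply beta_appl; eauto using bisim_refl|auto]. Qed.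

Lemma star_ge_lam d M M' : star (beta_ge (S d)) M M' -> star (beta_ge (S d)) (Lam M) (Lam M').
Proof. induction 1. apply star_refl; constructor; auto. eapply star_step; [apply bge_lam; eauto|auto]. Qed.

Lemma star_ge_appr d : forall N N1, star (beta_ge d) N N1 -> forall M M1, bisim M M1 ->
  star (beta_ge (S d)) (App M N) (App M1 N1).
Proof.
  induction 1; intros M0 M1 HM.
  - apply star_refl; constructor; auto.
  - eapply star_step; [apply bge_appr; eauto|]. apply IHstar. apply bisim_refl.
Qed.

Lemma star_ge_app d M M1 N N1 : star (beta_ge (S d)) M M1 -> star (beta_ge d) N N1 ->
  star (beta_ge (S d)) (App M N) (App M1 N1).
Proof.
  intros H; revert N N1; induction H; intros N0 N1 HN.
  - apply star_ge_appr; auto.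
  - eapply star_step; [apply bge_appl; eauto using bisim_refl|]. auto.
Qed.

Lemma beta_ge_beta d M N : beta_ge d M N -> beta M N.
Proof. induction 1; [assumption|apply beta_lam|apply beta_appl|apply beta_appr]; auto. Qed.

Lemma lemA R : (forall A B, R A B -> inf_rules R A B) ->
  forall M N, inf_rules R M N -> exists M1, star beta M M1 /\ infred_ge 1 M1 N.
Proof.
  intros HR M N H; induction H.
  - exists (Var x); split; auto. apply ige_var.
  - destruct IHinf_rules as [P1 [H1 H2]]. exists (Lam P1). split.
    eapply star_trans_beta; [exact H|]. apply star_beta_lam; auto.
    apply ige_lam; auto.
  - destruct IHinf_rules as [P1 [H2 H3]]. exists (App P1 Q). split.
    eapply star_trans_beta; [exact H|]. apply star_beta_appl; auto.
    apply ige_app; auto. apply ige_0. exists R; auto.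
Qed.

Lemma step_lemma : forall d M N, infred_ge d M N ->
  exists M', star (beta_ge d) M M' /\ infred_ge (S d) M' N.
Proof.
  induction 1.
  - destruct H as [R [HR HMN]]. destruct (lemA R HR M N (HR _ _ HMN)) as [M1 [H1 H2]].
    exists M1; split; auto. eapply star_map; [|exact H1]. intros; apply bge_0; auto.
  - exists (Var x); split. apply star_refl, bisim_refl. apply ige_var.
  - destruct IHinfred_ge as [M1 [H1 H2]]. exists (Lam M1); split.
    apply star_ge_lam; auto. apply ige_lam; auto.
  - destruct IHinfred_ge1 as [M1 [H1 H2]]. destruct IHinfred_ge2 as [N1 [H3 H4]].
    exists (App M1 N1); split. apply star_ge_app; auto. apply ige_app; auto.
Qed.

Inductive FS (P : term -> Prop) : term -> Prop :=
| fs_var n : FS P (Var n)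
| fs_lam M : FS P M -> FS P (Lam M)
| fs_app M N : FS P M -> P N -> FS P (App M N).

Lemma FS_mono (P Q : term -> Prop) : (forall t, P t -> Q t) -> forall t, FS P t -> FS Q t.
Proof. intros H t Ht; induction Ht; constructor; auto. Qed.

Definition G t := exists R : term -> Prop, (forall u, R u -> FS R u) /\ R t.

Lemma G_FS t : G t -> FS G t.
Proof. intros [R [HR Ht]]. apply FS_mono with R; [intros u Hu; exists R; auto | auto]. Qed.
Lemma FS_G t : FS G t -> G t.
Proof. intros H. exists (FS G). split; auto. intros u Hu. apply FS_mono with G; auto. intros; apply G_FS; auto. Qed.
Lemma G_coind (R : term -> Prop) : (forall u, R u -> FS (fun v => R v \/ G v) u) ->
  forall t, R t -> G t.
Proof.
  intros H t Ht. exists (fun v => R v \/ G v). split; [|left; auto].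
  intros u [Hu|Hu]; auto. apply FS_mono with G; auto. apply G_FS; auto.
Qed.

Lemma G_bisim : forall t u, bisim t u -> G t -> G u.
Proof.
  intros t u Hb Hg. apply (G_coind (fun u => exists t, bisim t u /\ G t)); [|eauto].
  clear. intros u [t [Hb Hg]]. apply G_FS in Hg. revert u Hb.
  induction Hg; intros u Hb; inversion Hb; subst.
  - constructor.
  - constructor. auto.
  - constructor. auto. left; eauto.
Qed.

Lemma G_lift : forall c t, G t -> G (lift c t).
Proof.
  intros c t Hg. apply (G_coind (fun u => exists c t, u = lift c t /\ G t)); [|eauto].
  clear. intros u [c [t [-> Hg]]]. apply G_FS in Hg. revert c.
  induction Hg; intros c.
  - rewrite lift_var. destruct (n <? c); constructor.
  - rewrite lift_lam. constructor. auto.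
  - rewrite lift_app. constructor. auto. left; eauto.
Qed.

Lemma G_subst : forall k u t, G t -> G u -> G (subst k u t).
Proof.
  intros k u t Hg Hu.
  apply (G_coind (fun v => exists k u t, v = subst k u t /\ G t /\ G u)); [|eauto 6].
  clear. intros v [k [u [t [-> [Hg Hu]]]]]. apply G_FS in Hg. revert k u Hu.
  induction Hg; intros k u Hu.
  - rewrite subst_var. destruct (n <? k); [constructor|].
    destruct (n =? k); [|constructor].
    apply FS_mono with G; [auto|]. apply G_FS; auto.
  - rewrite subst_lam. constructor. apply IHHg. apply G_lift; auto.
  - rewrite subst_app. constructor. auto. left; eauto 6.
Qed.

Lemma G_beta : forall M N, beta M N -> G M -> G N.
Proof.
  induction 1; intros HG; apply G_FS in HG; inversion HG; subst.
  - match goal with H : FS G (Lam _) |- _ => inversion H; subst end.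
    eapply G_bisim; [apply bisim_sym; exact H|].
    apply G_subst; auto. apply FS_G; auto.
  - apply FS_G. constructor. apply G_FS. apply IHbeta. apply FS_G; auto.
  - apply FS_G. constructor. apply G_FS. apply IHbeta. apply FS_G; auto.
    eapply G_bisim; eauto.
  - apply FS_G. constructor. apply G_FS. eapply G_bisim; [exact H|]. apply FS_G; auto.
    apply IHbeta; auto.
Qed.

Lemma G_star : forall M N, star beta M N -> G M -> G N.
Proof. induction 1; intros. eapply G_bisim; eauto. apply IHstar. eapply G_beta; eauto. Qed.

Lemma fs_child t d t' : FS G t -> child d t = Some t' -> FS G t'.
Proof.
  intros H Hc. destruct d, t; simpl in Hc; try discriminate; injection Hc; intros <-;
  inversion H; subst; auto. apply G_FS; auto.
Qed.

Lemma fs_follow : forall n t b u, FS G t -> follow t b n = Some u -> FS G u.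
Proof.
  induction n; simpl; intros t b u H Hf.
  - injection Hf; intros <-; auto.
  - destruct (child (b 0) t) eqn:E; [|discriminate].
    eapply IHn; [|exact Hf]. eapply fs_child; eauto.
Qed.

Lemma branch_shift t b t' : is_branch t b -> child (b 0) t = Some t' ->
  is_branch t' (fun k => b (S k)).
Proof. intros H Hc n. specialize (H (S n)). simpl in H. rewrite Hc in H. exact H. Qed.

Lemma fs_arg : forall t, FS G t -> forall b, is_branch t b -> exists m, b m = DArg.
Proof.
  induction 1; intros b Hb.
  - exfalso. apply (Hb 1). simpl. destruct (b 0); reflexivity.
  - destruct (b 0) eqn:E.
    + destruct (IHFS (fun k => b (S k))) as [m Hm].
      eapply branch_shift; eauto. rewrite E; reflexivity. eauto.
    + exfalso. apply (Hb 1). simpl. rewrite E. reflexivity.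
    + eauto.
  - destruct (b 0) eqn:E.
    + exfalso. apply (Hb 1). simpl. rewrite E. reflexivity.
    + destruct (IHFS (fun k => b (S k))) as [m Hm].
      eapply branch_shift; eauto. rewrite E; reflexivity. eauto.
    + eauto.
Qed.

Lemma follow_add : forall n t b u, follow t b n = Some u ->
  forall k, follow t b (n + k) = follow u (fun j => b (n + j)) k.
Proof.
  induction n; simpl; intros t b u Hf k.
  - injection Hf; intros <-; reflexivity.
  - destruct (child (b 0) t) eqn:E; [|discriminate].
    apply (IHn _ (fun k => b (S k)) u Hf k).
Qed.

Lemma G_is001 t : G t -> is001 t.
Proof.
  intros HG b Hb n. apply G_FS in HG.
  destruct (follow t b n) as [u|] eqn:E; [|exfalso; apply (Hb n E)].
  assert (Hu : FS G u) by (eapply fs_follow; eauto).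
  destruct (fs_arg u Hu (fun j => b (n + j))) as [m Hm].
  - intros k. rewrite <- (follow_add n t b u E k). apply Hb.
  - exists (n + m). split; [lia | exact Hm].
Qed.

Lemma is001_child t d t' : is001 t -> child d t = Some t' -> is001 t'.
Proof.
  intros H Hc b Hb n.
  set (b' := fun k => match k with 0 => d | S k => b k end).
  assert (Hb' : is_branch t b').
  { intros [|k]; simpl. discriminate. unfold b'. rewrite Hc. exact (Hb k). }
  destruct (H b' Hb' (S n)) as [[|m] [Hm1 Hm2]]; [lia|].
  exists m; split; [lia | exact Hm2].
Qed.

Definition spc (t : term) : term :=
  match t with Lam M => M | App M _ => M | Var n => Var n end.
Fixpoint sp (k : nat) (t : term) : term :=
  match k with 0 => t | S k => sp k (spc t) end.
Definition bsp (t : term) (j : nat) : dir :=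
  match sp j t with Lam _ => DLam | _ => DFun end.

Definition Pinv u := is001 u /\ ~ FS is001 u.

Lemma Pinv_step u : Pinv u -> Pinv (spc u) /\ child (bsp u 0) u = Some (spc u).
Proof.
  intros [H1 H2]. destruct u as [n|M|M N].
  - exfalso; apply H2; constructor.
  - simpl. split; [|reflexivity]. split. eapply is001_child with (d := DLam); eauto.
    intros HM; apply H2; constructor; auto.
  - simpl. split; [|reflexivity]. split. eapply is001_child with (d := DFun); eauto.
    intros HM; apply H2; constructor; auto.
    eapply is001_child with (d := DArg); eauto.
Qed.

Lemma follow_sp : forall k t, Pinv t -> follow t (bsp t) k = Some (sp k t).
Proof.
  induction k; intros t Ht; [reflexivity|].
  destruct (Pinv_step t Ht) as [H1 H2]. simpl. rewrite H2.
  apply (IHk (spc t) H1).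
Qed.

Lemma is001_FS t : is001 t -> FS is001 t.
Proof.
  intros H. apply NNPP. intros Hn.
  assert (HP : Pinv t) by (split; auto).
  destruct (H (bsp t)) with (n := 0) as [m [_ Hm]].
  - intros k. rewrite (follow_sp k t HP). discriminate.
  - unfold bsp in Hm. destruct (sp m t); discriminate.
Qed.

Lemma is001_G t : is001 t -> G t.
Proof.
  apply G_coind. intros u Hu. apply FS_mono with is001; auto. apply is001_FS; auto.
Qed.

Definition stepf (N : term) (d : nat) (M : term) : term :=
  epsilon (inhabits (Var 0)) (fun M' => star (beta_ge d) M M' /\ infred_ge (S d) M' N).

Fixpoint Mseq (M N : term) (d : nat) : term :=
  match d with 0 => M | S d => stepf N d (Mseq M N d) end.



Lemma Mseq_spec M N : infred M N -> forall d,
  infred_ge d (Mseq M N d) N /\ star (beta_ge d) (Mseq M N d) (Mseq M N (S d)).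
Proof.
  intros H d. induction d.
  - assert (H0 : infred_ge 0 M N) by (apply ige_0; auto).
    destruct (epsilon_spec (inhabits (Var 0))
      (fun M' => star (beta_ge 0) M M' /\ infred_ge 1 M' N) (step_lemma 0 M N H0)) as [A B].
    split; auto.
  - destruct IHd as [H0 _].
    pose proof (epsilon_spec (inhabits (Var 0))
      (fun M' => star (beta_ge d) (Mseq M N d) M' /\ infred_ge (S d) M' N)
      (step_lemma d _ N H0)) as [_ H1].
    change (infred_ge (S d) (Mseq M N (S d)) N) in H1.
    split; auto.
    pose proof (epsilon_spec (inhabits (Var 0))
      (fun M' => star (beta_ge (S d)) (Mseq M N (S d)) M' /\ infred_ge (S (S d)) M' N)
      (step_lemma (S d) _ N H1)) as [H2 _].
    exact H2.
Qed.

Theorem mainTheorem6 (M N : term) :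
  is001 M -> is001 N -> infred M N ->
  exists Ms : nat -> term,
    Ms 0 = M /\
    (forall d, is001 (Ms d)) /\
    (forall d, star (beta_ge d) (Ms d) (Ms (S d))) /\
    (forall d, infred_ge d (Ms d) N).
Proof.
  intros HM HN H. exists (Mseq M N).
  split; [reflexivity|]. split; [|split; intros d; apply (Mseq_spec M N H d)].
  intros d. apply G_is001. induction d.
  - apply is001_G; auto.
  - eapply G_star; [|exact IHd].
    eapply star_map; [|apply (Mseq_spec M N H d)]. apply beta_ge_beta.
Qed.
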